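(* Let $C$ be a linear code over $\mathbb{Z}_4$ of length $n$ and type $4^{k_1}2^{k_2}$, with generator matrix $G\in\mathbb{Z}_4^{(k_1+k_2)\times n}$. Suppose no column of $G$ lies in $(2\mathbb{Z}_4)^{k_1+k_2}$, and let $\mathbf{S}$ be a coset of $(2\mathbb{Z}_4)^{k_1+k_2}$ in $\mathbb{Z}_4^{k_1+k_2}$ other than $(2\mathbb{Z}_4)^{k_1+k_2}$ itself. Then $$\sum_{\mathbf{x}\in\mathbf{S}}w_L(\mathbf{x}G)=2^{k_1+k_2}n.$$
   Context: A linear code of length $n$ over $\mathbb{Z}_4$ is a $\mathbb{Z}_4$-submodule of $\mathbb{Z}_4^n$, of type $4^{k_1}2^{k_2}$ if isomorphic to $\mathbb{Z}_4^{k_1}\times\mathbb{Z}_2^{k_2}$. A generator matrix is a matrix whose rows generate the code and no proper subset of whose rows does. $2\mathbb{Z}_4=\{0,2\}$. Lee weight: $w_L(0)=0,w_L(1)=1,w_L(2)=2,w_L(3)=1$, additive on vectors. *)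

(* Defs.v *)
From HB Require Import structures.
From mathcomp Require Import all_boot all_order all_algebra.
Set Implicit Arguments. Unset Strict Implicit. Unset Printing Implicit Defensive.
Import GRing.Theory.
Local Open Scope ring_scope.

Definition leeZ4 (a : 'Z_4) : nat :=
  match nat_of_ord a with 0 => 0 | 1 => 1 | 2 => 2 | _ => 1 end%N.

Definition leeW n (x : 'rV['Z_4]_n) : nat := (\sum_(j < n) leeZ4 (x ord0 j))%N.

Definition in2Z4 (a : 'Z_4) : bool := (a == 0) || (a == 2).

Definition twoZ4vec m : {set 'rV['Z_4]_m} := [set x : 'rV['Z_4]_m | [forall i, in2Z4 (x ord0 i)]].

Definition linear_code n (C : {set 'rV['Z_4]_n}) : Prop :=
  0 \in C /\ (forall x y, x \in C -> y \in C -> x + y \in C)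
  /\ (forall (a : 'Z_4) x, x \in C -> a *: x \in C).

(* C is isomorphic (as a Z_4-module, i.e. as an abelian group) to
   Z_4^k1 x Z_2^k2. *)
Definition code_type n (C : {set 'rV['Z_4]_n}) (k1 k2 : nat) : Prop :=
  exists f : 'rV['Z_4]_k1 * 'rV['Z_2]_k2 -> 'rV['Z_4]_n,
    [/\ forall u v, f (u + v) = f u + f v,
        injective f &
        forall x, x \in C <-> exists u, x = f u].

Definition rows_span m n (G : 'M['Z_4]_(m, n)) (I : {set 'I_m}) : {set 'rV['Z_4]_n} :=
  [set u *m G | u in [set u : 'rV['Z_4]_m | [forall i, (i \notin I) ==> (u ord0 i == 0)]]].

Definition generator_matrix m n (G : 'M['Z_4]_(m, n)) (C : {set 'rV['Z_4]_n}) : Prop :=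
  rows_span G setT = C /\
  (forall I : {set 'I_m}, I != setT -> rows_span G I != C).

(* Main.v *)
Require Import Defs.
From mathcomp Require Import all_boot all_order all_algebra.
From mathcomp Require Import zify.
Local Open Scope ring_scope.
Import GRing.Theory.

Lemma in2Z4D (a b : 'Z_4) : in2Z4 a -> in2Z4 b -> in2Z4 (a + b).
Proof.
case: a => [[|[|[|[|a]]]] Ha] //; case: b => [[|[|[|[|b]]]] Hb] //.
Qed.

Lemma in2Z4_dbl (a : 'Z_4) : in2Z4 a -> a + a = 0.
Proof. by case: a => [[|[|[|[|a]]]] Ha] // _; apply/val_inj. Qed.

Lemma lee_pair (a b : 'Z_4) : ~~ in2Z4 b -> (leeZ4 a + leeZ4 (a + 2 * b)%R)%N = 2%N.
Proof.
case: a => [[|[|[|[|a]]]] Ha] //; case: b => [[|[|[|[|b]]]] Hb] //.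
Qed.

Lemma in2Z4_2 : in2Z4 (2 : 'Z_4). Proof. by []. Qed.
Lemma in2Z4_0 : in2Z4 (0 : 'Z_4). Proof. by []. Qed.

Lemma card_two m : #|twoZ4vec m| = (2 ^ m)%N.
Proof.
pose h (b : {ffun 'I_m -> bool}) : 'rV['Z_4]_m := \row_k (if b k then 2 else 0).
have -> : twoZ4vec m = h @: setT.
  apply/setP => x; rewrite inE; apply/forallP/imsetP.
  - move=> Hx; exists [ffun k => x ord0 k == 2] => //.
    apply/rowP => k; rewrite !mxE ffunE.
    have := Hx k; rewrite /in2Z4; case/orP => /eqP ->; by [].
  - case=> b _ -> k; rewrite mxE; by case: (b k).
rewrite card_imset ?cardsT ?card_ffun ?card_bool ?card_ord //.
move=> b1 b2 /rowP E; apply/ffunP => k; have := E k; rewrite !mxE.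
by case: (b1 k); case: (b2 k).
Qed.

Lemma pair_sum m (T : {set 'rV['Z_4]_m}) (d : 'rV['Z_4]_m) (F : 'rV['Z_4]_m -> nat) :
  (forall y, (y + d \in T) = (y \in T)) ->
  (forall y, (F y + F (y + d)%R)%N = 2%N) ->
  (\sum_(y in T) F y)%N = #|T|.
Proof.
move=> HT HF.
have E : (\sum_(y in T) F y = \sum_(y in T) F (y + d)%R)%N.
  rewrite (reindex_inj (h := fun y => y + d) (addIr d)) /=.
  by apply: eq_bigl => y; rewrite HT.
have : (\sum_(y in T) F y + \sum_(y in T) F (y + d)%R = #|T| * 2)%N.
  by rewrite -big_split /= (eq_bigr (fun _ => 2%N)) ?sum_nat_const // => y _.
rewrite -E; lia.
Qed.

Theorem corollary3p7 (n k1 k2 : nat) (C : {set 'rV['Z_4]_n})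
    (G : 'M['Z_4]_(k1 + k2, n)) (S : {set 'rV['Z_4]_(k1 + k2)}) :
  linear_code C ->
  code_type C k1 k2 ->
  generator_matrix G C ->
  (forall j : 'I_n, exists i : 'I_(k1 + k2), ~~ in2Z4 (G i j)) ->
  (exists v : 'rV['Z_4]_(k1 + k2), S = [set v + x | x in twoZ4vec (k1 + k2)]) ->
  S != twoZ4vec (k1 + k2) ->
  (\sum_(x in S) leeW (x *m G))%N = (2 ^ (k1 + k2) * n)%N.
Proof.
move=> _ _ _ Hcol [v ->] _.
set m := (k1 + k2)%N in G Hcol v *.
rewrite big_imset /=; last by move=> x y _ _; apply: addrI.
rewrite /leeW exchange_big /=.
rewrite (eq_bigr (fun _ => 2 ^ m)%N) ?sum_nat_const ?card_ord; first by rewrite mulnC.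
move=> j _; have [i Hi] := Hcol j.
rewrite -(card_two m).
pose d : 'rV['Z_4]_m := 2 *: delta_mx 0 i.
have dT : d \in twoZ4vec m.
  rewrite inE; apply/forallP => k; rewrite !mxE.
  by case: (k == i); rewrite /= ?mulr1 ?mulr0.
apply: (@pair_sum m _ d).
- move=> y; have dd : d + d = 0.
    apply/rowP => k; rewrite !mxE.
    by case: (k == i); rewrite /= ?mulr1 ?mulr0 ?addr0 //; apply/val_inj.
  apply/idP/idP => H.
  + have -> : y = (y + d) + d by rewrite -addrA dd addr0.
    move: H dT; rewrite !inE => /forallP H1 /forallP H2.
    by apply/forallP => k; rewrite mxE; apply: in2Z4D.
  + move: H dT; rewrite !inE => /forallP H1 /forallP H2.
    by apply/forallP => k; rewrite mxE; apply: in2Z4D.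
- move=> y; have Hd : (d *m G) 0 j = 2 * G i j.
    by rewrite /d -scalemxAl -rowE !mxE.
  have -> : ((v + (y + d)) *m G) 0 j = ((v + y) *m G) 0 j + 2 * G i j.
    by rewrite addrA mulmxDl -Hd [LHS]mxE.
  exact: lee_pair.
Qed.
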